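(* Let $V=[n]$, let $F:2^V\to\mathbb{R}$ be a submodular set function, $Z=\sum_{S\subseteq V}\exp(F(S))$, and for $x\in(0,1)^n$ let $$\mathrm{KL}(x)=-\sum_{S\subseteq V}\prod_{i\in S}x_i\prod_{j\notin S}(1-x_j)\,F(S)+\sum_{i=1}^n\big[x_i\log x_i+(1-x_i)\log(1-x_i)\big]+\log Z.$$ Then $\mathrm{KL}$ is DR-supermodular on $(0,1)^n$.
   Context: A function $h$ on a product of intervals is DR-submodular if for all $a\le b$ (componentwise) in its domain, all $i\in[n]$, and all $k\ge0$ with $a+ke_i,b+ke_i$ in the domain, $h(a+ke_i)-h(a)\ge h(b+ke_i)-h(b)$; $h$ is DR-supermodular if $-h$ is DR-submodular. $F$ submodular means $F(A)+F(B)\ge F(A\cup B)+F(A\cap B)$ for all $A,B\subseteq V$. *)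

(* Defs.v *)
From Stdlib Require Import Reals.
From mathcomp Require Import all_boot.
Set Implicit Arguments. Unset Strict Implicit.
Open Scope R_scope.

Definition submodular (n : nat) (F : {set 'I_n} -> R) : Prop :=
  forall A B : {set 'I_n}, F (A :|: B) + F (A :&: B) <= F A + F B.

Definition add_coord (n : nat) (a : 'I_n -> R) (i : 'I_n) (k : R) : 'I_n -> R :=
  fun j => a j + (if j == i then k else 0).

Definition le_vec (n : nat) (a b : 'I_n -> R) : Prop := forall j, a j <= b j.

Definition DR_submodular (n : nat) (D : ('I_n -> R) -> Prop) (h : ('I_n -> R) -> R) : Prop :=
  forall (a b : 'I_n -> R) (i : 'I_n) (k : R),
    D a -> D b -> le_vec a b -> 0 <= k ->
    D (add_coord a i k) -> D (add_coord b i k) ->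
    h (add_coord b i k) - h b <= h (add_coord a i k) - h a.

Definition DR_supermodular (n : nat) (D : ('I_n -> R) -> Prop) (h : ('I_n -> R) -> R) : Prop :=
  DR_submodular D (fun x => - h x).

Definition open_cube (n : nat) (x : 'I_n -> R) : Prop := forall i, 0 < x i < 1.

Definition logZ (n : nat) (F : {set 'I_n} -> R) : R :=
  ln (\big[Rplus/0]_(S : {set 'I_n}) exp (F S)).

Definition KL (n : nat) (F : {set 'I_n} -> R) (x : 'I_n -> R) : R :=
  - (\big[Rplus/0]_(S : {set 'I_n})
        ((\big[Rmult/1]_(i in S) x i) * (\big[Rmult/1]_(j in ~: S) (1 - x j)) * F S))
  + \big[Rplus/0]_(i < n) (x i * ln (x i) + (1 - x i) * ln (1 - x i))
  + logZ F.

(* Main.v *)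
Require Import Defs.
From Stdlib Require Import Reals Lra.
From HB Require Import structures.
From mathcomp Require Import all_boot.
Open Scope R_scope.

Lemma phi_tan u v : 0 < u -> 0 < v -> v * ln v + (ln v + 1) * (u - v) <= u * ln u.
Proof.
intros hu hv.
assert (hz : 0 < v / u) by (apply Rdiv_lt_0_compat; lra).
assert (e : ln (v / u) = ln v - ln u).
{ unfold Rdiv. assert (hi : 0 < / u) by (apply Rinv_0_lt_compat; lra).
  pose proof (ln_mult v (/ u) hv hi) as E1. pose proof (ln_Rinv u hu) as E2. lra. }
pose proof (exp_ineq1_le (ln (v / u))) as H. pose proof (exp_ln (v / u) hz) as E3.
rewrite E3 e in H.
assert (H2 : u * (1 + (ln v - ln u)) <= u * (v / u)) by (apply Rmult_le_compat_l; lra).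
replace (u * (v / u)) with v in H2 by (field; lra).
nra.
Qed.

Definition hh (x : R) := x * ln x + (1 - x) * ln (1 - x).
Definition dh (x : R) := ln x - ln (1 - x).

Lemma hh_tan u v : 0 < u < 1 -> 0 < v < 1 -> hh v + dh v * (u - v) <= hh u.
Proof.
intros hu hv. unfold hh, dh.
pose proof (phi_tan u v ltac:(lra) ltac:(lra)).
pose proof (phi_tan (1 - u) (1 - v) ltac:(lra) ltac:(lra)).
nra.
Qed.

Lemma hh_conv u v l : 0 < u < 1 -> 0 < v < 1 -> 0 <= l <= 1 ->
  hh (l * u + (1 - l) * v) <= l * hh u + (1 - l) * hh v.
Proof.
intros hu hv hl. set (m := l * u + (1 - l) * v).
assert (hm : 0 < m < 1).
{ unfold m. destruct (Req_dec l 0) as [->|hl0]; [lra|].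
  assert (0 < l * u) by (apply Rmult_lt_0_compat; lra).
  assert (0 < l * (1 - u)) by (apply Rmult_lt_0_compat; lra).
  assert (0 <= (1 - l) * v) by (apply Rmult_le_pos; lra).
  assert (0 <= (1 - l) * (1 - v)) by (apply Rmult_le_pos; lra). nra. }
pose proof (hh_tan u m hu hm) as H1. pose proof (hh_tan v m hv hm) as H2.
assert (H1' : l * (hh m + dh m * (u - m)) <= l * hh u) by (apply Rmult_le_compat_l; lra).
assert (H2' : (1 - l) * (hh m + dh m * (v - m)) <= (1 - l) * hh v) by (apply Rmult_le_compat_l; lra).
assert (E : l * (hh m + dh m * (u - m)) + (1 - l) * (hh m + dh m * (v - m)) = hh m)
  by (unfold m; ring).
lra.
Qed.

Lemma hh_incr a b k : 0 < a -> a <= b -> 0 <= k -> b + k < 1 ->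
  hh (a + k) - hh a <= hh (b + k) - hh b.
Proof.
intros ha hab hk hbk.
destruct (Req_dec a b) as [->|hne]; [lra|].
destruct (Req_dec k 0) as [->|hk0]; [rewrite !Rplus_0_r; lra|].
set (L := b + k - a). assert (hL : 0 < L) by (unfold L; lra).
set (l := k / L).
assert (hl : 0 <= l <= 1).
{ unfold l; split. unfold Rdiv; apply Rmult_le_pos; [lra| left; apply Rinv_0_lt_compat; lra].
  apply (Rmult_le_reg_r L); [lra|]. assert (E : k / L * L = k) by (field; lra). rewrite E. unfold L; lra. }
assert (Eb : b = l * a + (1 - l) * (b + k)).
{ unfold l, L. field. unfold L in hL; lra. }
assert (Ea : a + k = (1 - l) * a + (1 - (1 - l)) * (b + k)).
{ unfold l, L. field. unfold L in hL; lra. }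
pose proof (hh_conv a (b + k) l ltac:(lra) ltac:(lra) hl) as H1.
pose proof (hh_conv a (b + k) (1 - l) ltac:(lra) ltac:(lra) ltac:(lra)) as H2.
rewrite -Eb in H1. rewrite -Ea in H2. lra.
Qed.

Set Implicit Arguments. Unset Strict Implicit.

HB.instance Definition _ := Monoid.isComLaw.Build R 0 Rplus
  (fun a b c => esym (Rplus_assoc a b c)) Rplus_comm Rplus_0_l.
HB.instance Definition _ := Monoid.isComLaw.Build R 1 Rmult
  (fun a b c => esym (Rmult_assoc a b c)) Rmult_comm Rmult_1_l.

Section M.
Variable n : nat.
Implicit Types (j : 'I_n) (x y : 'I_n -> R) (T : {set 'I_n}) (G : {set 'I_n} -> R).

Definition w T x := \big[Rmult/1]_i (if i \in T then x i else 1 - x i).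
Definition wbar T x j := \big[Rmult/1]_(i | i != j) (if i \in T then x i else 1 - x i).
Definition M x G := \big[Rplus/0]_T (w T x * G T).

Lemma w_eq T x : (\big[Rmult/1]_(i in T) x i) * (\big[Rmult/1]_(j in ~: T) (1 - x j)) = w T x.
Proof.
rewrite /w [RHS](bigID (mem T)) /=. f_equal.
  apply: eq_big => i //. by move=> ->.
apply: eq_big => i; first by rewrite in_setC.
by rewrite in_setC => /negbTE ->.
Qed.

Lemma w_split T x j : w T x = (if j \in T then x j else 1 - x j) * wbar T x j.
Proof. by rewrite /w (bigD1 j). Qed.

Lemma wbar_ext T x y j : (forall i, i != j -> x i = y i) -> wbar T x j = wbar T y j.
Proof. by move=> h; apply: eq_bigr => i /h ->. Qed.

Lemma wbar_add T x j : wbar (j |: T) x j = wbar T x j.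
Proof.
apply: eq_bigr => i hij. by rewrite in_setU1 (negbTE hij).
Qed.

Lemma wbar_ge0 T x j : (forall i, 0 <= x i <= 1) -> 0 <= wbar T x j.
Proof.
move=> hx. apply: (big_ind (fun v => 0 <= v)); [lra| |].
  by move=> u v hu hv; apply Rmult_le_pos.
move=> i _. case: (i \in T); move: (hx i); lra.
Qed.

Definition tog j T := if j \in T then T :\ j else j |: T.

Lemma togK j : involutive (tog j).
Proof.
move=> T; rewrite /tog. case hj: (j \in T).
  rewrite in_setD1 eqxx /=. by rewrite setD1K.
rewrite in_setU1 eqxx /=. apply/setP => i. rewrite in_setD1 in_setU1.
by case: eqP => // ->; rewrite hj.
Qed.

Lemma M_split x G j : M x G =
  \big[Rplus/0]_(T : {set 'I_n} | j \notin T) (wbar T x j * (x j * G (j |: T) + (1 - x j) * G T)).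
Proof.
rewrite /M (bigID (fun T : {set 'I_n} => j \in T)) /=.
rewrite (reindex_inj (can_inj (togK j))) /=.
have e1 : \big[Rplus/0]_(T | j \in tog j T) (w (tog j T) x * G (tog j T)) =
  \big[Rplus/0]_(T : {set 'I_n} | j \notin T) (x j * wbar T x j * G (j |: T)).
  apply: eq_big => T; first by rewrite /tog; case: ifP => h;
     rewrite ?in_setD1 ?in_setU1 ?eqxx ?h.
  rewrite /tog => hT. case hj: (j \in T) hT; first by rewrite in_setD1 eqxx.
  move=> _. by rewrite (w_split _ _ j) in_setU1 eqxx /= wbar_add.
rewrite e1 -big_split /=. apply: eq_bigr => T hT.
rewrite (w_split _ _ j) (negbTE hT). ring.
Qed.


Definition antitone G := forall T T', T \subset T' -> G T' <= G T.
Definition upd x j t := fun i => if i == j then t else x i.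

Lemma M_ext x y G : (forall i, x i = y i) -> M x G = M y G.
Proof.
move=> h; apply: eq_bigr => T _. f_equal. apply: eq_bigr => i _. by rewrite h.
Qed.

Lemma M_step x j t t' G : antitone G -> (forall i, 0 <= x i <= 1) -> 0 <= t -> t <= t' -> t' <= 1 ->
  M (upd x j t') G <= M (upd x j t) G.
Proof.
move=> hG hx ht htt ht'.
rewrite !(M_split _ _ j).
apply: (big_ind2 (fun u v => u <= v)); [lra| by move=> *; apply Rplus_le_compat|].
move=> T hT.
rewrite (@wbar_ext T (upd x j t') x j); last by move=> i hi; rewrite /upd (negbTE hi).
rewrite (@wbar_ext T (upd x j t) x j); last by move=> i hi; rewrite /upd (negbTE hi).
rewrite /upd eqxx.
have hw := wbar_ge0 T j hx.
have hg : G (j |: T) <= G T by apply: hG; apply: subsetUr.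
apply Rmult_le_compat_l => //. nra.
Qed.

Lemma M_mono a b G : antitone G -> (forall i, 0 <= a i <= 1) -> (forall i, 0 <= b i <= 1) ->
  (forall i, a i <= b i) -> M b G <= M a G.
Proof.
move=> hG ha hb hab.
pose c m := fun i : 'I_n => if (i < m)%N then b i else a i.
have hc : forall m i, 0 <= c m i <= 1 by move=> m i; rewrite /c; case: ifP.
have key : forall m, M (c m) G <= M a G.
  elim=> [|m IH].
    rewrite (@M_ext (c 0%N) a); [lra| by []].
  apply: Rle_trans IH.
  case: (ltnP m n) => hm.
    pose j := Ordinal hm.
    rewrite (@M_ext (c m.+1) (upd (c m) j (b j))); last first.
      move=> i; rewrite /c /upd ltnS leq_eqVlt.
      case: (eqVneq i j) => [->|hij]; first by rewrite eqxx.
      have -> : (nat_of_ord i == m) = false.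
        apply/negbTE; apply: contra hij => /eqP e. by apply/eqP; apply: val_inj.
      done.
    rewrite [X in _ <= X](@M_ext (c m) (upd (c m) j (a j))); last first.
      move=> i; rewrite /c /upd.
      case: (eqVneq i j) => [->|hij] //. by rewrite /= ltnn.
    apply: M_step => //; move: (ha j) (hb j) (hab j); lra.
  rewrite (@M_ext (c m.+1) (c m)); first lra.
  move=> i; rewrite /c.
  have h1 : (i < m)%N by apply: leq_trans (ltn_ord i) hm.
  by rewrite h1 (leq_trans h1 (leqnSn m)).
rewrite (@M_ext b (c n)); first by apply: key.
by move=> i; rewrite /c ltn_ord.
Qed.

End M.

Lemma KL_eq n (F : {set 'I_n} -> R) x :
  KL F x = - M x F + \big[Rplus/0]_(i < n) hh (x i) + logZ F.
Proof.
rewrite /KL /M. do 3 f_equal. apply: eq_bigr => T _. by rewrite w_eq.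
Qed.

Lemma M_add n (F : {set 'I_n} -> R) x i k :
  M (add_coord x i k) F = M x F +
     M (upd x i 0) (fun T => k * (F (i |: T) - F (T :\ i))).
Proof.
rewrite !(M_split _ _ i) -big_split /=. apply: eq_bigr => T hT.
rewrite (@wbar_ext _ T (add_coord x i k) x i); last by move=> j hj; rewrite /add_coord (negbTE hj) Rplus_0_r.
rewrite (@wbar_ext _ T (upd x i 0) x i); last by move=> j hj; rewrite /upd (negbTE hj).
rewrite /add_coord /upd eqxx.
have -> : (i |: T) :\ i = T.
  apply/setP => z; rewrite in_setD1 in_setU1. case: eqP => [->|] //=. by rewrite (negbTE hT).
have -> : T :\ i = T.
  apply/setP => z; rewrite in_setD1. case: eqP => [->|] //=. by rewrite (negbTE hT).
ring.
Qed.

Lemma H_add n x (i : 'I_n) k :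
  \big[Rplus/0]_(j < n) hh (add_coord x i k j) =
  \big[Rplus/0]_(j < n) hh (x j) + (hh (x i + k) - hh (x i)).
Proof.
rewrite (bigD1 i) //= [in RHS](bigD1 i) //=.
have -> : \big[Rplus/0]_(j < n | j != i) hh (add_coord x i k j) =
          \big[Rplus/0]_(j < n | j != i) hh (x j).
  apply: eq_bigr => j hj. by rewrite /add_coord (negbTE hj) Rplus_0_r.
rewrite /add_coord eqxx. set S := \big[Rplus/0]_(j < n | j != i) hh (x j). clearbody S. generalize (hh (x i + k)) (hh (x i)). intros. lra.
Qed.

Lemma D_anti n (F : {set 'I_n} -> R) i k : submodular F -> 0 <= k ->
  antitone (fun T => k * (F (i |: T) - F (T :\ i))).
Proof.
move=> hF hk T T' hTT.
have := hF (i |: T) (T' :\ i).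
have -> : (i |: T) :|: (T' :\ i) = i |: T'.
  apply/setP => z; rewrite !inE. move: (subsetP hTT z).
  by case: (z \in T); case: (z \in T'); case: (z == i) => //= ->.
have -> : (i |: T) :&: (T' :\ i) = T :\ i.
  apply/setP => z; rewrite !inE. move: (subsetP hTT z).
  by case: (z \in T); case: (z \in T'); case: (z == i) => //= ->.
move=> h. apply Rmult_le_compat_l => //. lra.
Qed.

Theorem mainTheorem14 (n : nat) (F : {set 'I_n} -> R) :
  submodular F -> DR_supermodular (@open_cube n) (KL F).
Proof.
move=> hF a b i k ha hb hab hk ha' hb'.
rewrite !KL_eq !M_add !H_add.
have hD := D_anti i hF hk.
have hm := @M_mono n (upd a i 0) (upd b i 0) _ hD.
have hm' : M (upd b i 0) (fun T => k * (F (i |: T) - F (T :\ i))) <=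
           M (upd a i 0) (fun T => k * (F (i |: T) - F (T :\ i))).
  apply: hm.
  - move=> j; rewrite /upd; case: (j == i); [lra| move: (ha j); lra].
  - move=> j; rewrite /upd; case: (j == i); [lra| move: (hb j); lra].
  - move=> j; rewrite /upd; case: (j == i); [lra| apply: hab].
have hi := hh_incr (a i) (b i) k.
move: (ha i) (hab i) (hb' i). rewrite /add_coord eqxx => hai habi hbi.
have := hi ltac:(lra) habi hk ltac:(lra).
lra.
Qed.
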